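(* Suppose there exists $r>0$ such that $\phi(x)>r$ for all $x>0$. For each integer $N\ge1$ let $V(N)$ denote the optimal value of the problem: minimize $Y_{N-1}^+$ over $d_0,\dots,d_{N-1}\ge0$ subject to $\sum_{k=0}^{N-1}\mathrm{BED}_O(d_k)\le c$. Then there exists a finite optimal number of fractions $N^*$, i.e. $\min_{N\in\{1,2,\dots\}}V(N)$ is attained at some finite $N^*$.
   Context: Model: Tumor parameters $\alpha_T>0$, $\beta_T>0$, $[\alpha/\beta]_T=\alpha_T/\beta_T$; organ-at-risk (OAR) parameter $[\alpha/\beta]_O>0$; sparing factor $0<\gamma<1$; OAR limit $c>0$. Define $\mathrm{BED}_T(d)=d\left(1+\frac{d}{[\alpha/\beta]_T}\right)$ and $\mathrm{BED}_O(d)=\gamma d\left(1+\frac{\gamma d}{[\alpha/\beta]_O}\right)$. Tumor growth between doses follows $\frac{1}{x}\frac{dx}{dt}=\phi(x)$, with $\phi:(0,\infty)\to\mathbb{R}$ continuous and non-increasing. Doses $d_0,\dots,d_{N-1}$ are delivered at times $0,1,\dots,N-1$. With $Y=\ln(\text{number of tumor cells})/\alpha_T$, let $F$ be the one-day growth map for $Y$ under the ODE. With initial cell number $X_0>0$ (fixed, independent of $N$) and $Y_0^-=\ln(X_0)/\alpha_T$: $Y_0^+=Y_0^--\mathrm{BED}_T(d_0)$, $Y_{i+1}^+=F(Y_i^+)-\mathrm{BED}_T(d_{i+1})$ for $i=0,\dots,N-2$. *)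

(* Defs.v *)
From Stdlib Require Import Reals.
From Coquelicot Require Import Coquelicot.
Open Scope R_scope.

Definition BED_T (abT d : R) : R := d * (1 + d / abT).
Definition BED_O (abO gamma d : R) : R := gamma * d * (1 + gamma * d / abO).

(* F is the one-day growth map of Y = ln(x)/alpha_T under (1/x) dx/dt = phi(x):
   for every y, F y = Yf 1 where Yf is a (classical) solution on [0,1] of
   dY/dt = phi(exp(alpha_T * Y)) / alpha_T with Yf 0 = y. *)
Definition is_growth_map (alphaT : R) (phi : R -> R) (F : R -> R) : Prop :=
  forall y : R, exists Yf : R -> R,
    Yf 0 = y /\
    (forall t, 0 <= t <= 1 -> continuity_pt Yf t) /\
    (forall t, 0 < t < 1 -> is_derive Yf t (phi (exp (alphaT * Yf t)) / alphaT)) /\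
    F y = Yf 1.

Fixpoint Yplus (abT : R) (F : R -> R) (Y0 : R) (d : nat -> R) (i : nat) : R :=
  match i with
  | O => Y0 - BED_T abT (d O)
  | S j => F (Yplus abT F Y0 d j) - BED_T abT (d (S j))
  end.

Fixpoint sum_BED_O (abO gamma : R) (d : nat -> R) (N : nat) : R :=
  match N with
  | O => 0
  | S j => sum_BED_O abO gamma d j + BED_O abO gamma (d j)
  end.

Definition feasible (abO gamma c : R) (N : nat) (d : nat -> R) : Prop :=
  (forall k, (k < N)%nat -> 0 <= d k) /\ sum_BED_O abO gamma d N <= c.

Definition V (abT abO gamma c : R) (F : R -> R) (Y0 : R) (N : nat) : Rbar :=
  Glb_Rbar (fun y => exists d : nat -> R,
                feasible abO gamma c N d /\ y = Yplus abT F Y0 d (N - 1)).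

(* Main.v *)
Require Import Defs.
From Stdlib Require Import Reals Lra Lia.
From Coquelicot Require Import Coquelicot.
Open Scope R_scope.

Lemma F_grow alphaT phi F r (HalphaT : 0 < alphaT) (HF : is_growth_map alphaT phi F)
  (Hphi_r : forall x, 0 < x -> r < phi x) : forall y, y + r / alphaT <= F y.
Proof.
  intro y. destruct (HF y) as [Yf [H0 [Hc [Hd H1]]]].
  destruct (MVT_gen Yf 0 1 (fun t => phi (exp (alphaT * Yf t)) / alphaT)) as [c [_ Hm]].
  - intros x Hx. rewrite Rmin_left in Hx by lra. rewrite Rmax_right in Hx by lra. apply Hd; lra.
  - intros x Hx. rewrite Rmin_left in Hx by lra. rewrite Rmax_right in Hx by lra. apply Hc; lra.
  - rewrite H1, <- H0. assert (Hp := Hphi_r _ (exp_pos (alphaT * Yf c))).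
    assert (r / alphaT < phi (exp (alphaT * Yf c)) / alphaT).
    { unfold Rdiv. apply Rmult_lt_compat_r; [apply Rinv_0_lt_compat|]; lra. }
    lra.
Qed.

Lemma BED_bound abT abO gamma d : 0 < abT -> 0 < abO -> 0 < gamma -> 0 <= d ->
  BED_T abT d <= (/gamma + abO / (gamma * gamma * abT)) * BED_O abO gamma d.
Proof.
  intros HT HO Hg Hd. unfold BED_T, BED_O.
  set (a := gamma * d).
  assert (Ha : 0 <= a) by (unfold a; nra).
  assert (Hd' : d = a / gamma) by (unfold a; field; lra).
  rewrite Hd'.
  assert (E : (/ gamma + abO / (gamma * gamma * abT)) * (a * (1 + a / abO))
     = a / gamma * (1 + a / gamma / abT) + a * a / (gamma * abO) + abO * a / (gamma*gamma*abT))
    by (field; lra).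
  replace (gamma * (a / gamma)) with a by (field; lra).
  rewrite E.
  assert (0 <= a * a / (gamma * abO)).
  { apply Rmult_le_pos; [nra| left; apply Rinv_0_lt_compat; nra]. }
  assert (0 <= abO * a / (gamma*gamma*abT)).
  { apply Rmult_le_pos; [nra| left; apply Rinv_0_lt_compat;
      apply Rmult_lt_0_compat; [apply Rmult_lt_0_compat|]; lra]. }
  lra.
Qed.

Lemma sum_nonneg abO gamma d N : 0 < abO -> 0 < gamma ->
  (forall k, (k < N)%nat -> 0 <= d k) -> 0 <= sum_BED_O abO gamma d N.
Proof.
  intros HO Hg. induction N; simpl; intros Hk; [lra|].
  assert (0 <= d N) by (apply Hk; lia).
  assert (0 <= BED_O abO gamma (d N)).
  { unfold BED_O. assert (0 <= gamma * d N) by nra.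
    assert (0 <= gamma * d N / abO) by (apply Rmult_le_pos; [lra| left; apply Rinv_0_lt_compat; lra]).
    nra. }
  assert (0 <= sum_BED_O abO gamma d N) by (apply IHN; intros; apply Hk; lia). lra.
Qed.

Lemma Yplus_bound abT abO gamma F Y0 d K q (HT : 0 < abT) (HO : 0 < abO) (Hg : 0 < gamma)
  (HK : K = /gamma + abO / (gamma * gamma * abT))
  (HFg : forall y, y + q <= F y) :
  forall i, (forall k, (k <= i)%nat -> 0 <= d k) ->
  Y0 + INR i * q - K * sum_BED_O abO gamma d (S i) <= Yplus abT F Y0 d i.
Proof.
  induction i; intros Hk.
  - simpl. assert (H := BED_bound abT abO gamma (d O) HT HO Hg (Hk O (le_n _))).
    rewrite <- HK in H. lra.
  - rewrite S_INR. simpl Yplus. change (sum_BED_O abO gamma d (S (S i))) with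
      (sum_BED_O abO gamma d (S i) + BED_O abO gamma (d (S i))).
    assert (H := BED_bound abT abO gamma (d (S i)) HT HO Hg (Hk _ (le_n _))).
    rewrite <- HK in H.
    assert (IH := IHi (fun k Hk' => Hk k (le_S _ _ Hk'))).
    assert (HF1 := HFg (Yplus abT F Y0 d i)). lra.
Qed.

Lemma argmin (f : nat -> Rbar) M : exists n, (1 <= n <= S M)%nat /\
  forall k, (1 <= k <= S M)%nat -> Rbar_le (f n) (f k).
Proof.
  induction M.
  - exists 1%nat. split; [lia|]. intros k Hk. replace k with 1%nat by lia. apply Rbar_le_refl.
  - destruct IHM as [n [Hn Hm]].
    destruct (Rbar_le_lt_dec (f n) (f (S (S M)))) as [H|H].
    + exists n. split; [lia|]. intros k Hk.
      destruct (Nat.eq_dec k (S (S M))) as [->|]; [exact H|]. apply Hm; lia.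
    + exists (S (S M)). split; [lia|]. intros k Hk.
      destruct (Nat.eq_dec k (S (S M))) as [->|]; [apply Rbar_le_refl|].
      apply Rbar_le_trans with (f n); [apply Rbar_lt_le; exact H| apply Hm; lia].
Qed.

Theorem theorem4
  (alphaT betaT abO gamma c X0 r : R) (phi F : R -> R)
  (HalphaT : 0 < alphaT) (HbetaT : 0 < betaT) (HabO : 0 < abO)
  (Hgamma0 : 0 < gamma) (Hgamma1 : gamma < 1) (Hc : 0 < c) (HX0 : 0 < X0)
  (Hphi_cont : forall x, 0 < x -> continuity_pt phi x)
  (Hphi_mono : forall x y, 0 < x -> x <= y -> phi y <= phi x)
  (HF : is_growth_map alphaT phi F)
  (Hr : 0 < r) (Hphi_r : forall x, 0 < x -> r < phi x) :
  exists Nstar : nat, (1 <= Nstar)%nat /\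
    forall N : nat, (1 <= N)%nat ->
      Rbar_le (V (alphaT / betaT) abO gamma c F (ln X0 / alphaT) Nstar)
              (V (alphaT / betaT) abO gamma c F (ln X0 / alphaT) N).
Proof.
  set (abT := alphaT / betaT).
  assert (HT : 0 < abT) by (unfold abT, Rdiv; apply Rmult_lt_0_compat; [lra|apply Rinv_0_lt_compat; lra]).
  set (Y0 := ln X0 / alphaT).
  set (K := /gamma + abO / (gamma * gamma * abT)).
  assert (HK : 0 < K).
  { unfold K. assert (0 < / gamma) by (apply Rinv_0_lt_compat; lra).
    assert (0 < abO / (gamma * gamma * abT)).
    { apply Rmult_lt_0_compat; [lra| apply Rinv_0_lt_compat;
      apply Rmult_lt_0_compat; [apply Rmult_lt_0_compat|]; lra]. } lra. }
  set (q := r / alphaT).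
  assert (Hq : 0 < q) by (unfold q, Rdiv; apply Rmult_lt_0_compat; [lra|apply Rinv_0_lt_compat; lra]).
  assert (HFg := F_grow alphaT phi F r HalphaT HF Hphi_r).
  assert (HV1 : Rbar_le (V abT abO gamma c F Y0 1) Y0).
  { destruct (Glb_Rbar_correct (fun y => exists d : nat -> R,
                feasible abO gamma c 1 d /\ y = Yplus abT F Y0 d (1 - 1))) as [Hlb _].
    apply Hlb. exists (fun _ => 0). split.
    - split; [intros; lra|]. simpl. unfold BED_O. rewrite Rmult_0_r, Rmult_0_l. lra.
    - simpl. unfold BED_T. ring. }
  destruct (nfloor_ex (K * c / q)) as [M HM].
  { apply Rmult_le_pos; [nra| left; apply Rinv_0_lt_compat; lra]. }
  assert (Hbig : forall N, (S M <= N - 1)%nat -> Rbar_le Y0 (V abT abO gamma c F Y0 N)).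
  { intros N HN.
    destruct (Glb_Rbar_correct (fun y => exists d : nat -> R,
                feasible abO gamma c N d /\ y = Yplus abT F Y0 d (N - 1))) as [_ Hg].
    apply Hg. intros x [d [[Hd Hs] ->]].
    simpl.
    assert (Hb := Yplus_bound abT abO gamma F Y0 d K q HT HabO Hgamma0 eq_refl HFg (N - 1)
      (fun k Hk => Hd k ltac:(lia))).
    replace (S (N - 1)) with N in Hb by lia.
    assert (HI : INR (S M) <= INR (N - 1)) by (apply le_INR; exact HN).
    rewrite S_INR in HI.
    assert (K * c / q * q = K * c) by (field; lra).
    assert (K * c <= INR (N - 1) * q) by nra.
    assert (K * sum_BED_O abO gamma d N <= K * c) by (apply Rmult_le_compat_l; lra).
    lra. }
  destruct (argmin (V abT abO gamma c F Y0) (S M)) as [n [Hn Hm]].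
  exists n. split; [lia|]. intros N HN.
  destruct (Compare_dec.le_lt_dec N (S (S M))) as [Hle|Hlt].
  - apply Hm; lia.
  - apply Rbar_le_trans with (V abT abO gamma c F Y0 1); [apply Hm; lia|].
    apply Rbar_le_trans with (Finite Y0); [exact HV1|]. apply Hbig. lia.
Qed.
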